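(* Let $n\in\mathbb N$ and consider the class of non-empty subsets of $\mathbb R^n$ with out-radius at most $1$. On this class, the map $K\mapsto K^c$ is continuous with respect to the Hausdorff metric.
   Context: $B(x,r)$ is the closed Euclidean ball and $B=B(0,1)$. For $A\subseteq\mathbb R^n$, $A^c=\bigcap_{x\in A}B(x,1)$. The out-radius of $A$ is the infimum of $R\ge0$ such that $A\subseteq B(z,R)$ for some $z$. The Hausdorff distance is $d_H(K,L)=\inf\{\lambda\ge0:K\subseteq L+\lambda B,\ L\subseteq K+\lambda B\}$. *)

(* Defs.v *)
From HB Require Import structures.
From mathcomp Require Import all_boot all_order all_algebra.
From mathcomp Require Import all_classical all_reals ereal.
Set Implicit Arguments. Unset Strict Implicit. Unset Printing Implicit Defensive.
Import Order.TTheory GRing.Theory Num.Theory.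
Local Open Scope classical_set_scope.
Local Open Scope ring_scope.

Section Defs.
Variables (R : realType) (n : nat).
Notation V := 'rV[R]_n.

Definition enorm (x : V) : R := Num.sqrt (\sum_(i < n) (x 0 i) ^+ 2).

Definition cball (x : V) (r : R) : set V := [set y | enorm (y - x) <= r].

Definition unitB : set V := cball 0 1.

(* A^c = intersection of B(x,1) over x in A. *)
Definition bdual (A : set V) : set V := [set y | forall x, A x -> cball x 1 y].

Definition msum (A B : set V) : set V := [set a + b | a in A & b in B].
Definition sscale (l : R) (A : set V) : set V := [set l *: a | a in A].

(* Out-radius: inf of R >= 0 such that A is contained in some B(z,R)
   (extended-real valued; +oo if no such R). *)
Definition outradius (A : set V) : \bar R :=
  ereal_inf [set r%:E | r in [set r : R | 0 <= r /\ exists z, A `<=` cball z r]].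

Definition hausdorff (K L : set V) : \bar R :=
  ereal_inf [set l%:E | l in [set l : R | 0 <= l /\
     K `<=` msum L (sscale l unitB) /\ L `<=` msum K (sscale l unitB)]].

Definition admissible (A : set V) : Prop :=
  A !=set0 /\ (outradius A <= 1%:E)%E.
End Defs.

(* Main.v *)
Require Import Defs.
From HB Require Import structures.
From mathcomp Require Import all_boot all_order all_algebra.
From mathcomp Require Import all_classical all_reals ereal.
From mathcomp Require Import ring lra.
Import Order.TTheory GRing.Theory Num.Theory.
Local Open Scope classical_set_scope.
Local Open Scope ring_scope.

Section Aux.
Variables (R : realType) (n : nat).
Notation V := 'rV[R]_n.

Definition nsq (v : V) : R := \sum_(i < n) (v 0 i) ^+ 2.
Definition dot (u v : V) : R := \sum_(i < n) (u 0 i * v 0 i).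

Lemma nsq_ge0 (v : V) : 0 <= nsq v.
Proof. by apply: sumr_ge0 => i _; rewrite sqr_ge0. Qed.

Lemma enorm_sq (v : V) : enorm v ^+ 2 = nsq v.
Proof. by rewrite /enorm sqr_sqrtr // nsq_ge0. Qed.

Lemma enorm_ge0 (v : V) : 0 <= enorm v.
Proof. exact: sqrtr_ge0. Qed.

Lemma enorm_le (v : V) r : 0 <= r -> (enorm v <= r) <-> (nsq v <= r ^+ 2).
Proof.
move=> r0; rewrite -enorm_sq; split => H.
  by rewrite ler_sqr // ?nnegrE ?enorm_ge0.
by rewrite -ler_sqr // ?nnegrE ?enorm_ge0.
Qed.

Lemma nsq_conv (a b : V) t :
  nsq ((1 - t) *: a + t *: b) = (1 - t) * nsq a + t * nsq b - t * (1 - t) * nsq (a - b).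
Proof.
rewrite /nsq !mulr_sumr -big_split -sumrB /=; apply: eq_bigr => i _.
rewrite !mxE; ring.
Qed.

Lemma nsqZ c (a : V) : nsq (c *: a) = c ^+ 2 * nsq a.
Proof. rewrite /nsq mulr_sumr; apply: eq_bigr => i _; rewrite !mxE; ring. Qed.

Lemma nsqN (a : V) : nsq (- a) = nsq a.
Proof. rewrite /nsq; apply: eq_bigr => i _; rewrite !mxE; ring. Qed.

Lemma nsqD (a b : V) : nsq (a + b) = nsq a + 2 * dot a b + nsq b.
Proof.
rewrite /nsq /dot mulr_sumr -!big_split /=; apply: eq_bigr => i _.
rewrite !mxE; ring.
Qed.

Lemma nsq0_coord (a : V) : nsq a <= 0 -> forall i, a 0 i = 0.
Proof.
move=> H i; have H0 : nsq a = 0 by apply/eqP; rewrite eq_le H nsq_ge0.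
have := @psumr_eq0P R _ xpredT (fun i => a 0 i ^+ 2) (fun i _ => sqr_ge0 _) H0 i isT.
by move/eqP; rewrite sqrf_eq0 => /eqP.
Qed.

Lemma dot_le (a b : V) al be : 0 <= al -> 0 <= be ->
  nsq a <= al ^+ 2 -> nsq b <= be ^+ 2 -> dot a b <= al * be.
Proof.
move=> a0 b0 Ha Hb.
have [al0|alp] := eqVneq al 0.
  subst al; move: Ha; rewrite expr0n /= => /nsq0_coord Za.
  by rewrite mul0r /dot big1 // => i _; rewrite Za mul0r.
have [be0|bep] := eqVneq be 0.
  subst be; move: Hb; rewrite expr0n /= => /nsq0_coord Zb.
  by rewrite mulr0 /dot big1 // => i _; rewrite Zb mulr0.
have := nsq_ge0 (be *: a - al *: b).
rewrite nsqD nsqN !nsqZ.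
have -> : dot (be *: a) (- (al *: b)) = - (be * al) * dot a b.
  rewrite /dot mulr_sumr; apply: eq_bigr => i _; rewrite !mxE; ring.
have alp' : 0 < al by rewrite lt_def alp.
have bep' : 0 < be by rewrite lt_def bep.
move=> H.
have H1 : 2 * (be * al) * dot a b <= 2 * (be * al) * (al * be).
  have : be ^+ 2 * nsq a <= be^+2 * al^+2 by rewrite ler_wpM2l // sqr_ge0.
  have : al ^+ 2 * nsq b <= al^+2 * be^+2 by rewrite ler_wpM2l // sqr_ge0.
  move=> h1 h2; nra.
rewrite ler_pM2l in H1 => //; nra.
Qed.

Lemma nsq_tri (a b : V) al be : 0 <= al -> 0 <= be ->
  nsq a <= al ^+ 2 -> nsq b <= be ^+ 2 -> nsq (a + b) <= (al + be) ^+ 2.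
Proof.
move=> a0 b0 Ha Hb; rewrite nsqD.
have := @dot_le a b al be a0 b0 Ha Hb; nra.
Qed.

Lemma coord_le (a : V) i : (a 0 i) ^+ 2 <= nsq a.
Proof.
rewrite /nsq (bigD1 i) //= lerDl; apply: sumr_ge0 => j _; exact: sqr_ge0.
Qed.

Lemma nsq_bound (a : V) M : (forall i, (a 0 i) ^+ 2 <= M) -> nsq a <= n%:R * M.
Proof.
move=> H; rewrite /nsq.
apply: le_trans (ler_sum _ (fun i _ => H i)) _.
by rewrite sumr_const card_ord mulr_natl.
Qed.


Lemma nsq_conv' (a b : V) s t : s + t = 1 ->
  nsq (s *: a + t *: b) = s * nsq a + t * nsq b - s * t * nsq (a - b).
Proof.
move=> st; have -> : s = 1 - t by rewrite -st addrK.
rewrite nsq_conv; ring.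
Qed.

Lemma in_sscale (eta : R) (v : V) : 0 < eta -> nsq v <= eta ^+ 2 ->
  sscale eta (@unitB R n) v.
Proof.
move=> e0 Hv; exists (eta^-1 *: v); last first.
  by rewrite scalerA mulfV ?scale1r // gt_eqF.
rewrite /unitB /cball /= subr0; apply/enorm_le => //.
rewrite nsqZ expr1n exprVn ler_pdivrMl ?exprn_gt0 // mulr1 //.
Qed.

Lemma key (A B : set V) l eta z : 0 <= l -> 0 < eta ->
  2 * l + l ^+ 2 <= eta ^+ 2 ->
  B `<=` msum A (sscale l (@unitB R n)) -> bdual B z ->
  bdual A `<=` msum (bdual B) (sscale eta (@unitB R n)).
Proof.
move=> l0 e0 hq HB Bz y Ay.
have Hy : forall x', B x' -> nsq (y - x') <= (1 + l) ^+ 2.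
  move=> x' /HB [a Aa [c [b Ub <-] <-]].
  rewrite opprD addrA; apply: nsq_tri => //.
    by rewrite -enorm_le //; exact: Ay.
  rewrite nsqN nsqZ -[leRHS]mulr1; apply: ler_wpM2l; first exact: sqr_ge0.
  by move: Ub; rewrite /unitB /cball /= subr0 (enorm_le _ _ (@ler01 R)) expr1n.
have Hz : forall x', B x' -> nsq (z - x') <= 1.
  by move=> x' Bx'; rewrite -(expr1n R 2) -enorm_le //; exact: Bz.
set D := nsq (y - z).
case: (leP D (eta ^+ 2)) => HD.
  exists z => //; exists (y - z); last by rewrite addrC subrK.
  exact: in_sscale.
set q := 2 * l + l ^+ 2.
have Dp : 0 < D by apply: lt_trans HD; rewrite exprn_gt0.
have q0 : 0 <= q by rewrite /q addr_ge0 ?mulr_ge0 ?sqr_ge0.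
set s := q / D.
have sD : s * D = q by rewrite /s mulfVK // gt_eqF.
have s0 : 0 <= s by rewrite /s divr_ge0 // ltW.
have s1 : s <= 1 by rewrite /s ler_pdivrMr // mul1r; apply: (le_trans hq); apply: ltW.
exists (s *: z + (1 - s) *: y).
  move=> x' Bx'; apply/enorm_le => //; rewrite expr1n.
  have -> : s *: z + (1 - s) *: y - x' = s *: (z - x') + (1 - s) *: (y - x').
    by apply/rowP => i; rewrite !mxE; ring.
  rewrite nsq_conv'; last by ring.
  have -> : z - x' - (y - x') = - (y - z) by apply/rowP => i; rewrite !mxE; ring.
  rewrite nsqN -/D.
  have h1 : s * nsq (z - x') <= s * 1 by apply: ler_wpM2l => //; exact: Hz.
  have h2 : (1 - s) * nsq (y - x') <= (1 - s) * (1 + l) ^+ 2.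
    by apply: ler_wpM2l; [rewrite subr_ge0 | exact: Hy].
  have : s * (1 - s) * D = (1 - s) * q by rewrite -sD; ring.
  have h4 : (1 - s) * (1 + l) ^+ 2 = (1 - s) + (1 - s) * q by rewrite /q; ring.
  move=> h3; lra.
exists (y - (s *: z + (1 - s) *: y)); last by rewrite addrC subrK.
apply: in_sscale => //.
have -> : y - (s *: z + (1 - s) *: y) = s *: (y - z) by apply/rowP => i; rewrite !mxE; ring.
rewrite nsqZ -/D expr2 -mulrA sD.
have : s * q <= 1 * q by apply: ler_wpM2r.
have : q <= eta ^+ 2 by [].
lra.
Qed.


Lemma cauchy_sup (u g : nat -> R) : (forall k, 0 <= g k) ->
  (forall j k, (k <= j)%N -> u j - u k <= g k /\ u k - u j <= g k) ->
  exists c, forall k, u k - g k <= c /\ c <= u k + g k.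
Proof.
move=> g0 Hc.
set A := [set u m - g m | m in [set: nat]].
have ubk : forall k, ubound A (u k + g k).
  move=> k _ [m _ <-].
  case: (leqP k m) => h.
    have [h1 _] := Hc m k h; have := g0 m; lra.
  have [_ h2] := Hc k m (ltnW h); have := g0 k; lra.
have An : A !=set0 by exists (u 0%N - g 0%N); exists 0%N.
exists (sup A) => k; split.
  apply: sup_upper_bound; first by split => //; exists (u 0%N + g 0%N); exact: ubk.
  by exists k.
exact: ge_sup.
Qed.

Lemma n_le_sq : (n%:R : R) <= n%:R ^+ 2.
Proof.
case: n => [|m]; first by rewrite expr0n.
have : (1 : R) <= m.+1%:R by rewrite ler1n.
nra.
Qed.

Definition ww (k : nat) : R := (k.+1)%:R.
Definition ee (k : nat) : R := (ww k ^+ 2)^-1.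
Definition gg (k : nat) : R := 4 / ww k.

Lemma ww_ge1 k : 1 <= ww k.
Proof. by rewrite /ww ler1n. Qed.

Lemma ee_gt0 k : 0 < ee k.
Proof. by rewrite /ee invr_gt0 exprn_gt0 // (lt_le_trans ltr01 (ww_ge1 k)). Qed.

Lemma ee_w k : ee k * ww k ^+ 2 = 1.
Proof. by rewrite /ee mulVf // expf_neq0 // gt_eqF // (lt_le_trans ltr01 (ww_ge1 k)). Qed.

Lemma ee_le1 k : ee k <= 1.
Proof. have := ee_w k; have := ww_ge1 k; have := ee_gt0 k; nra. Qed.

Lemma ee_mono j k : (k <= j)%N -> ee j <= ee k.
Proof.
move=> kj; have h : ww k <= ww j by rewrite /ww ler_nat.
have h1 := ww_ge1 k.
have p : forall i, 0 < ww i ^+ 2 by move=> i; rewrite exprn_gt0 // (lt_le_trans ltr01 (ww_ge1 i)).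
rewrite /ee lef_pV2 ?posrE //; nra.
Qed.

Lemma ee_ww k : ee k * ww k <= 1.
Proof. have := ee_w k; have := ww_ge1 k; have := ee_gt0 k; nra. Qed.

Lemma gg_ww k : gg k * ww k = 4.
Proof. by rewrite /gg mulfVK // gt_eqF // (lt_le_trans ltr01 (ww_ge1 k)). Qed.

Lemma gg_sq k : gg k ^+ 2 = 16 * ee k.
Proof.
have h := ee_w k; have h2 := gg_ww k; have := ww_ge1 k => h3.
have : gg k ^+ 2 * ww k ^+ 2 = 16 * ee k * ww k ^+ 2.
  by rewrite -exprMn h2 -mulrA h; ring.
move/(mulIf _); apply; rewrite expf_neq0 // gt_eqF // (lt_le_trans ltr01 h3).
Qed.

Lemma gg_ge0 k : 0 <= gg k.
Proof. by rewrite /gg divr_ge0 // (le_trans ler01 (ww_ge1 k)). Qed.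


Lemma exists_center (L : set V) : admissible L -> exists z, bdual L z.
Proof.
case=> [[x0 Lx0] Hout].
set S := [set r : R | 0 <= r /\ exists z, L `<=` cball z r].
have SN : S !=set0.
  have : (outradius L < 2%:E)%E by apply: le_lt_trans Hout _; rewrite lte_fin ltr1n.
  by case/ereal_inf_lt => _ [r Sr <-] _; exists r.
have Slb : has_lbound S by exists 0 => r [].
set rho := inf S.
have rho1 : rho <= 1 by move: Hout; rewrite /outradius (ereal_inf_EFin Slb SN) lee_fin.
have rho0 : 0 <= rho by apply: lb_le_inf => // r [].
have Hk : forall k, exists z, L `<=` cball z (rho + ee k).
  move=> k; have hlt : rho < rho + ee k by rewrite ltrDl ee_gt0.
  have [r [r0 [z Hz]] hr] := inf_lt SN hlt.
  by exists z => x Lx; apply: le_trans (Hz x Lx) (ltW hr).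
have [zf Hzf] := choice Hk.
have Hn : forall k x, L x -> nsq (x - zf k) <= (rho + ee k) ^+ 2.
  move=> k x Lx; rewrite -enorm_le; [exact: Hzf | have := ee_gt0 k; lra].
have Hc : forall j k, (k <= j)%N -> nsq (zf j - zf k) <= gg k ^+ 2.
  move=> j k kj.
  set D := nsq (zf j - zf k).
  set T := ((rho + ee j) ^+ 2 + (rho + ee k) ^+ 2) / 2 - D / 4.
  have h2 : 1 / 2 + 1 / 2 = (1 : R) by rewrite -splitr.
  have HT : forall x, L x -> nsq (x - ((1/2) *: zf j + (1/2) *: zf k)) <= T.
    move=> x Lx.
    have -> : x - ((1/2) *: zf j + (1/2) *: zf k) = (1/2) *: (x - zf j) + (1/2) *: (x - zf k).
      apply/rowP => i; rewrite !mxE.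
      rewrite {1}(_ : x 0 i = (1/2 + 1/2) * x 0 i); last by rewrite h2 mul1r.
      ring.
    rewrite nsq_conv' //.
    have -> : (x - zf j) - (x - zf k) = - (zf j - zf k) by apply/rowP=> i; rewrite !mxE; ring.
    have := Hn j x Lx; have := Hn k x Lx.
    rewrite nsqN -/D /T; lra.
  have T0 : 0 <= T by apply: le_trans (nsq_ge0 _) (HT x0 Lx0).
  have ST : S (Num.sqrt T).
    split; first exact: sqrtr_ge0.
    exists ((1/2) *: zf j + (1/2) *: zf k) => x Lx; rewrite /cball /=.
    apply/enorm_le; first exact: sqrtr_ge0.
    by rewrite sqr_sqrtr //; exact: HT.
  have rT : rho <= Num.sqrt T by apply: ge_inf.
  have rT2 : rho ^+ 2 <= T.
    by rewrite -(sqr_sqrtr T0) ler_sqr ?nnegrE ?sqrtr_ge0.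
  have ej := @ee_mono j k kj; have ek1 := ee_le1 k; have ej0 := ee_gt0 j; have gk := gg_sq k.
  have p1 : rho * ee j <= ee j by rewrite -[leRHS]mul1r ler_wpM2r // ltW.
  have p2 : rho * ee k <= ee k by rewrite -[leRHS]mul1r ler_wpM2r // ltW // ee_gt0.
  have p3 : ee j * ee j <= ee j by rewrite -[leRHS]mulr1 ler_wpM2l ?(ltW ej0) ?(le_trans ej ek1).
  have p4 : ee k * ee k <= ee k by rewrite -[leRHS]mulr1 ler_wpM2l // ltW // ee_gt0.
  rewrite /T in rT2; rewrite gk; nra.
have Hcoord : forall i, exists c, forall k, zf k 0 i - gg k <= c /\ c <= zf k 0 i + gg k.
  move=> i; apply: cauchy_sup; first exact: gg_ge0.
  move=> j k kj; have := coord_le (zf j - zf k) i; rewrite !mxE => h.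
  have := Hc j k kj; have := gg_ge0 k => g0 hc; split; nra.
have [cf Hcf] := choice Hcoord.
exists (\row_i cf i) => x Lx; rewrite /cball /=.
set z := \row_i cf i.
have Hk2 : forall k, enorm (z - x) <= rho + ee k + n%:R * gg k.
  move=> k; have e0 := ee_gt0 k; have g0 := gg_ge0 k.
  have ng0 : 0 <= n%:R * gg k by rewrite mulr_ge0.
  apply/enorm_le; first lra.
  have -> : z - x = (zf k - x) + (z - zf k) by apply/rowP => i; rewrite !mxE; ring.
  apply: nsq_tri => //; first lra.
    by rewrite -opprB nsqN; exact: Hn.
  apply: le_trans (@nsq_bound (z - zf k) (gg k ^+ 2) _) _.
    move=> i; rewrite !mxE; have [h1 h2] := Hcf i k; nra.
  by rewrite [leRHS]exprMn; apply: ler_wpM2r; [exact: sqr_ge0 | exact: n_le_sq].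
rewrite leNgt; apply/negP => a1.
set a := enorm (z - x) in a1 Hk2.
have ha : 0 < a - 1 by rewrite subr_gt0.
set C := 1 + 4 * (n%:R : R).
have C0 : 0 <= C / (a - 1).
  by apply: divr_ge0; [rewrite /C; have := ler0n R n; lra | exact: ltW].
have := archi_boundP C0.
set k := Num.Def.archi_bound _ => hk.
have hk' : C / (a - 1) < ww k by apply: lt_le_trans hk _; rewrite /ww ler_nat.
rewrite ltr_pdivrMr // in hk'.
have h3 : (a - 1) * ww k <= (ee k + n%:R * gg k) * ww k.
  by apply: ler_wpM2r; [apply: le_trans (ww_ge1 k) | have := Hk2 k; lra].
rewrite [leRHS]mulrDl in h3.
have h4 : n%:R * gg k * ww k = 4 * n%:R by rewrite -mulrA gg_ww mulrC.
have := ee_ww k; rewrite /C in hk'; lra.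
Qed.

End Aux.

Theorem corollary2p10 (R : realType) (n : nat) :
  forall K : set 'rV[R]_n, admissible K ->
  forall eps : R, 0 < eps ->
  exists2 delta : R, 0 < delta &
  forall L : set 'rV[R]_n, admissible L ->
    (hausdorff K L < delta%:E)%E ->
    (hausdorff (bdual K) (bdual L) < eps%:E)%E.
Proof.
move=> K AK eps e0.
set eta := eps / 2.
have eta0 : 0 < eta by rewrite /eta divr_gt0.
have q0 : 0 < eta ^+ 2 / 3 by rewrite divr_gt0 // exprn_gt0.
exists (Num.min 1 (eta ^+ 2 / 3)); first by rewrite lt_min ltr01 q0.
move=> L AL HKL.
have [_ [l [l0 [H1 H2]] <-] hl] := ereal_inf_lt HKL.
rewrite lte_fin lt_min in hl; case/andP: hl => hl1 hl2.
rewrite ltr_pdivlMr // in hl2.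
have hq : 2 * l + l ^+ 2 <= eta ^+ 2 by nra.
have [zK BK] := @exists_center R n K AK.
have [zL BL] := @exists_center R n L AL.
apply: (@le_lt_trans _ _ (eta%:E)); last by rewrite lte_fin /eta ltr_pdivrMr // ltr_pMr // ltr1n.
apply: ereal_inf_lbound; exists eta => //; split; first exact: ltW.
split.
  exact: (@key R n _ _ _ _ _ l0 eta0 hq H2 BL).
exact: (@key R n _ _ _ _ _ l0 eta0 hq H1 BK).
Qed.
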